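(* Let $n$ be a positive even integer and let $\lambda_n$ be the Lebesgue function of polynomial interpolation in $\mathbb{P}^2_n$ at the Morrow-Patterson points $MP_n$. Then $\lambda_n(x,y)=\lambda_n(-x,y)$ for all $(x,y)\in Q=[-1,1]^2$.
   Context: $\mathbb{P}^2_n$ is the space of real bivariate polynomials of total degree at most $n$. The Morrow-Patterson points are $MP_n=\{(x_m,y_{m,k}) : m=1,\dots,n+1,\ k=1,\dots,\tfrac n2+1\}$ with $x_m=\cos\frac{m\pi}{n+2}$ and $y_{m,k}=\cos\frac{2k\pi}{n+3}$ if $m$ is odd, $y_{m,k}=\cos\frac{(2k-1)\pi}{n+3}$ if $m$ is even; this set is unisolvent for $\mathbb{P}^2_n$. The Lebesgue function is $\lambda_n(x,y)=\sum_{a\in MP_n}|\ell_a(x,y)|$, where $\ell_a\in\mathbb{P}^2_n$ are the Lagrange basis polynomials with $\ell_a(b)=\delta_{ab}$ for $a,b\in MP_n$. *)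

(* Defs.v *)
From Stdlib Require Import Reals Arith.
Open Scope R_scope.

Definition mp_x (n m : nat) : R := cos (INR m * PI / INR (n + 2)).

Definition mp_y (n m k : nat) : R :=
  if Nat.even m then cos ((2 * INR k - 1) * PI / INR (n + 3))
  else cos (2 * INR k * PI / INR (n + 3)).

Definition mp_index (n m k : nat) : Prop :=
  (1 <= m <= n + 1)%nat /\ (1 <= k <= n / 2 + 1)%nat.

Definition in_P2 (n : nat) (f : R -> R -> R) : Prop :=
  exists c : nat -> nat -> R, forall x y : R,
    f x y = sum_f_R0 (fun i => sum_f_R0 (fun j => c i j * x ^ i * y ^ j) (n - i)) n.

Definition is_lagrange_MP (n : nat) (l : nat -> nat -> R -> R -> R) : Prop :=
  forall m k, mp_index n m k ->
    in_P2 n (l m k) /\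
    (forall m' k', mp_index n m' k' ->
       l m k (mp_x n m') (mp_y n m' k') =
         if (Nat.eqb m m' && Nat.eqb k k')%bool then 1 else 0).

Definition lebesgue_MP (n : nat) (l : nat -> nat -> R -> R -> R) (x y : R) : R :=
  sum_f_R0 (fun m => sum_f_R0 (fun k => Rabs (l (S m) (S k) x y)) (n / 2)) n.

(* Main.v *)
Require Import Defs.
From Stdlib Require Import Reals Arith.
From Stdlib Require Import Lra Lia Morphisms Setoid.
Open Scope R_scope.

#[local] Instance sum_proper : Proper (pointwise_relation nat eq ==> eq ==> eq) sum_f_R0.
Proof. intros f g H N N' <-. apply sum_eq; intros; apply H. Qed.

Lemma sum_swap (f : nat -> nat -> R) A B :
  sum_f_R0 (fun a => sum_f_R0 (fun b => f a b) B) A =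
  sum_f_R0 (fun b => sum_f_R0 (fun a => f a b) A) B.
Proof.
  induction A as [|A IH].
  - simpl. reflexivity.
  - rewrite tech5, IH, <- sum_plus. apply sum_eq; intros; now rewrite tech5.
Qed.

Lemma sum_mult (f g : nat -> R) A B :
  sum_f_R0 f A * sum_f_R0 g B = sum_f_R0 (fun i => sum_f_R0 (fun j => f i * g j) B) A.
Proof.
  rewrite Rmult_comm, scal_sum. apply sum_eq; intros i _.
  rewrite scal_sum. apply sum_eq; intros; ring.
Qed.

Lemma sum_scal_r (f : nat -> R) A c :
  sum_f_R0 f A * c = sum_f_R0 (fun i => f i * c) A.
Proof. rewrite Rmult_comm, scal_sum. reflexivity. Qed.

Lemma sum_pad (f : nat -> R) d K : (forall i, (d < i)%nat -> f i = 0) -> (d <= K)%nat ->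
  sum_f_R0 f d = sum_f_R0 f K.
Proof.
  intros H HK. induction HK as [|K HK IH]. reflexivity.
  rewrite tech5, <- IH, (H (S K)) by lia. ring.
Qed.

Lemma sum_delta (f : nat -> R) a K : (a <= K)%nat ->
  sum_f_R0 (fun i => f i * (if Nat.eqb i a then 1 else 0)) K = f a.
Proof.
  intros H. induction K as [|K IH].
  - assert (a = 0)%nat by lia. subst. simpl. ring.
  - rewrite tech5. destruct (Nat.eq_dec a (S K)) as [->|Hne].
    + rewrite sum_eq_R0. rewrite Nat.eqb_refl. ring.
      intros i Hi. replace (Nat.eqb i (S K)) with false. ring. symmetry; apply Nat.eqb_neq; lia.
    + rewrite IH by lia. replace (Nat.eqb (S K) a) with false. ring. symmetry; apply Nat.eqb_neq; lia.
Qed.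

Lemma sum_rev (f : nat -> R) N : sum_f_R0 (fun i => f (N - i)%nat) N = sum_f_R0 f N.
Proof.
  induction N as [|N IH]. reflexivity.
  rewrite decomp_sum by lia. rewrite tech5. rewrite Nat.sub_0_r. simpl Nat.pred.
  assert (E: sum_f_R0 (fun i => f (S N - S i)%nat) N = sum_f_R0 f N) by (rewrite <- IH; reflexivity).
  cbv beta. rewrite E. ring.
Qed.

Lemma telesc (u : nat -> R) N : sum_f_R0 (fun m => u (S m) - u m) N = u (S N) - u 0%nat.
Proof. induction N as [|N IH]. simpl. ring. rewrite tech5, IH. ring. Qed.

Definition g (P m : nat) : R := INR m * PI / INR P.

Lemma sin_kPI k : sin (INR k * PI) = 0.
Proof.
  induction k as [|k IH]. simpl. rewrite Rmult_0_l; apply sin_0.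
  rewrite S_INR, Rmult_plus_distr_r, Rmult_1_l, neg_sin, IH. ring.
Qed.

Lemma cos_kPI k : cos (INR k * PI) = (-1) ^ k.
Proof.
  induction k as [|k IH]. simpl. rewrite Rmult_0_l; apply cos_0.
  rewrite S_INR, Rmult_plus_distr_r, Rmult_1_l, neg_cos, IH. simpl. ring.
Qed.

Lemma cos_sum P k : (0 < k < 2 * P)%nat ->
  sum_f_R0 (fun m => cos (INR k * g P m)) (2 * P - 1) = 0.
Proof.
  intros Hk.
  assert (HP: 0 < INR P) by (apply lt_0_INR; lia).
  assert (HkP: INR k < 2 * INR P).
  { replace 2 with (INR 2) by reflexivity. rewrite <- mult_INR. apply lt_INR; lia. }
  assert (Hk0: 0 < INR k) by (apply lt_0_INR; lia).
  set (th := INR k * PI / INR P).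
  set (h := th / 2).
  assert (Hh2: h * (2 * INR P) = INR k * PI) by (unfold h, th; field; lra).
  assert (Hh: 0 < sin h).
  { pose proof PI_RGT_0. apply sin_gt_0; nra. }
  assert (E: forall m, 2 * sin h * cos (INR k * g P m) =
            sin (INR (S m) * th - h) - sin (INR m * th - h)).
  { intros m. replace (INR k * g P m) with (INR m * th) by (unfold g, th; field; lra).
    rewrite S_INR. replace ((INR m + 1) * th - h) with (INR m * th + h) by (unfold h; field).
    rewrite sin_plus, sin_minus. ring. }
  assert (S2: 2 * sin h * sum_f_R0 (fun m => cos (INR k * g P m)) (2 * P - 1) = 0).
  { rewrite scal_sum. rewrite (sum_eq _ (fun m => sin (INR (S m) * th - h) - sin (INR m * th - h))).
    2:{ intros i _. rewrite <- E. ring. }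
    rewrite (telesc (fun m => sin (INR m * th - h))).
    replace (S (2 * P - 1)) with (2 * P)%nat by lia.
    rewrite mult_INR. replace (INR 2 * INR P * th - h) with (- h + 2 * INR k * PI)
      by (unfold th; simpl; field; lra).
    rewrite sin_period. simpl INR. replace (0 * th - h) with (-h) by ring. ring. }
  apply Rmult_integral in S2. destruct S2 as [S2|S2]; [lra|exact S2].
Qed.

Lemma cos_sum_gen P k : (0 < P)%nat -> (k < 2 * P)%nat ->
  sum_f_R0 (fun m => cos (INR k * g P m)) (2 * P - 1) = if Nat.eqb k 0 then 2 * INR P else 0.
Proof.
  intros HP Hk. destruct k as [|k].
  - simpl Nat.eqb. rewrite (sum_eq _ (fun _ => 1)).
    2:{ intros; simpl INR; rewrite Rmult_0_l; apply cos_0. }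
    rewrite sum_cte. replace (S (2 * P - 1)) with (2 * P)%nat by lia. rewrite mult_INR. simpl. ring.
  - simpl Nat.eqb. apply cos_sum. lia.
Qed.

Lemma sin_orth P i i' : (0 < i' < P)%nat -> (i <= P)%nat ->
  sum_f_R0 (fun m => sin (INR i * g P m) * sin (INR i' * g P m)) (2 * P - 1)
  = INR P * (if Nat.eqb i i' then 1 else 0).
Proof.
  intros Hi' Hi.
  assert (Hd: exists d, (d <= P)%nat /\ forall x, cos (INR i * x - INR i' * x) = cos (INR d * x)
             /\ (Nat.eqb d 0 = Nat.eqb i i')).
  { destruct (le_lt_dec i' i) as [H|H].
    - exists (i - i')%nat. split. lia. intros x. rewrite minus_INR by lia. split.
      f_equal; ring. destruct (Nat.eqb_spec (i - i') 0); destruct (Nat.eqb_spec i i'); auto; lia.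
    - exists (i' - i)%nat. split. lia. intros x. rewrite minus_INR by lia. split.
      rewrite <- cos_neg. f_equal; ring. destruct (Nat.eqb_spec (i' - i) 0); destruct (Nat.eqb_spec i i'); auto; lia. }
  destruct Hd as [d [Hd Hdx]].
  rewrite (sum_eq _ (fun m => (cos (INR d * g P m) - cos (INR (i + i') * g P m)) * / 2)).
  2:{ intros m _. destruct (Hdx (g P m)) as [Hc _]. rewrite <- Hc, plus_INR.
      replace ((INR i + INR i') * g P m) with (INR i * g P m + INR i' * g P m) by ring.
      rewrite cos_minus, cos_plus. field. }
  rewrite <- sum_scal_r, minus_sum, !cos_sum_gen by lia.
  destruct (Hdx 0) as [_ ->]. replace (Nat.eqb (i + i') 0) with false by (symmetry; apply Nat.eqb_neq; lia).
  destruct (Nat.eqb i i'); field.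
Qed.

Lemma sign_sin P i m : (0 < P)%nat -> (i <= P)%nat ->
  (-1) ^ m * sin (INR i * g P m) = - sin (INR (P - i) * g P m).
Proof.
  intros HP Hi. assert (0 < INR P) by (apply lt_0_INR; lia).
  replace (INR (P - i) * g P m) with (INR m * PI - INR i * g P m)
    by (rewrite minus_INR by lia; unfold g; field; lra).
  rewrite sin_minus, sin_kPI, cos_kPI. ring.
Qed.

Lemma cos_refl P m : (0 < P)%nat -> (m <= 2 * P)%nat -> cos (g P (2 * P - m)) = cos (g P m).
Proof.
  intros HP Hm. assert (0 < INR P) by (apply lt_0_INR; lia).
  replace (g P (2 * P - m)) with (- g P m + 2 * INR 1 * PI)
    by (unfold g; rewrite minus_INR, mult_INR by lia; simpl; field; lra).
  rewrite cos_period, cos_neg. reflexivity.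
Qed.

Definition stepc (e : nat -> R) (i : nat) : R :=
  match i with 0%nat => 0 | S j => (e j + e (S (S j))) / 2 end.

Lemma mul_cos_gen (e : nat -> R) s d : e 0%nat = 0 ->
  sum_f_R0 (fun i => stepc e i * sin (INR i * s)) (S d)
  - cos s * sum_f_R0 (fun i => e i * sin (INR i * s)) d
  = (e (S d) * sin (INR d * s) + e (S (S d)) * sin (INR (S d) * s)) / 2.
Proof.
  intros H0. induction d as [|d IH].
  - simpl sum_f_R0. simpl stepc. rewrite H0. simpl INR.
    replace (0 * s) with 0 by ring. rewrite sin_0. field.
  - pose proof (tech5 (fun i => stepc e i * sin (INR i * s)) (S d)) as E1.
    pose proof (tech5 (fun i => e i * sin (INR i * s)) d) as E2.
    rewrite E1, E2. cbv beta.
    set (A := sum_f_R0 (fun i => stepc e i * sin (INR i * s)) (S d)) in *.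
    set (B := sum_f_R0 (fun i => e i * sin (INR i * s)) d) in *.
    assert (HA: A = cos s * B + (e (S d) * sin (INR d * s) + e (S (S d)) * sin (INR (S d) * s)) / 2) by lra.
    rewrite HA.
    assert (T: sin (INR (S (S d)) * s) = 2 * cos s * sin (INR (S d) * s) - sin (INR d * s)).
    { replace (INR d * s) with (INR (S d) * s - s) by (rewrite S_INR; ring).
      replace (INR (S (S d)) * s) with (INR (S d) * s + s) by (rewrite (S_INR (S d)); ring).
      rewrite sin_minus, sin_plus. ring. }
    simpl stepc. rewrite T. field.
Qed.

Fixpoint ecoef (a : nat) : nat -> R :=
  match a with
  | 0%nat => fun i => if Nat.eqb i 1 then 1 else 0
  | S a' => stepc (ecoef a')
  end.

Lemma ecoef0 a : ecoef a 0%nat = 0.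
Proof. destruct a; reflexivity. Qed.

Lemma ecoef_supp a i : (S a < i)%nat -> ecoef a i = 0.
Proof.
  revert i; induction a as [|a IH]; intros i Hi.
  - simpl. destruct (Nat.eqb_spec i 1). lia. reflexivity.
  - destruct i as [|j]. reflexivity. change (ecoef (S a) (S j)) with ((ecoef a j + ecoef a (S (S j)))/2). rewrite !IH by lia. field.
Qed.

Lemma expand1 a s : cos s ^ a * sin s = sum_f_R0 (fun i => ecoef a i * sin (INR i * s)) (S a).
Proof.
  induction a as [|a IH].
  - simpl. replace (0 * s) with 0 by ring. replace (1 * s) with s by ring. rewrite sin_0. ring.
  - pose proof (mul_cos_gen (ecoef a) s (S a) (ecoef0 a)) as H.
    rewrite !ecoef_supp in H by lia. simpl ecoef.
    rewrite <- IH in H. simpl pow. lra.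
Qed.

Lemma expandK a K s : (S a <= K)%nat ->
  cos s ^ a * sin s = sum_f_R0 (fun i => ecoef a i * sin (INR i * s)) K.
Proof.
  intros H. rewrite expand1. apply sum_pad; auto.
  intros i Hi. rewrite ecoef_supp by lia. ring.
Qed.

Lemma swap4 (X : nat -> nat -> nat -> nat -> R) (ba : nat -> nat) n K :
  sum_f_R0 (fun a => sum_f_R0 (fun b => sum_f_R0 (fun i => sum_f_R0 (fun j => X a b i j) K) K) (ba a)) n
  = sum_f_R0 (fun i => sum_f_R0 (fun j => sum_f_R0 (fun a => sum_f_R0 (fun b => X a b i j) (ba a)) n) K) K.
Proof.
  transitivity (sum_f_R0 (fun a => sum_f_R0 (fun i => sum_f_R0 (fun b => sum_f_R0 (fun j => X a b i j) K) (ba a)) K) n).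
  { apply sum_eq; intros a _. exact (sum_swap (fun b i => sum_f_R0 (fun j => X a b i j) K) (ba a) K). }
  transitivity (sum_f_R0 (fun i => sum_f_R0 (fun a => sum_f_R0 (fun b => sum_f_R0 (fun j => X a b i j) K) (ba a)) n) K).
  { exact (sum_swap (fun a i => sum_f_R0 (fun b => sum_f_R0 (fun j => X a b i j) K) (ba a)) n K). }
  apply sum_eq; intros i _.
  transitivity (sum_f_R0 (fun a => sum_f_R0 (fun j => sum_f_R0 (fun b => X a b i j) (ba a)) K) n).
  { apply sum_eq; intros a _. exact (sum_swap (fun b j => X a b i j) (ba a) K). }
  exact (sum_swap (fun a j => sum_f_R0 (fun b => X a b i j) (ba a)) n K).
Qed.

Definition poly2 n (c : nat -> nat -> R) x y :=
  sum_f_R0 (fun i => sum_f_R0 (fun j => c i j * x ^ i * y ^ j) (n - i)) n.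

Definition SS K (be : nat -> nat -> R) s t :=
  sum_f_R0 (fun i => sum_f_R0 (fun j => be i j * sin (INR i * s) * sin (INR j * t)) K) K.

Definition beta n (c : nat -> nat -> R) i j :=
  sum_f_R0 (fun a => sum_f_R0 (fun b => c a b * ecoef a i * ecoef b j) (n - a)) n.

Lemma expand2 n c s t :
  poly2 n c (cos s) (cos t) * sin s * sin t = SS (n + 2) (beta n c) s t.
Proof.
  set (K := (n + 2)%nat).
  set (X := fun a b i j => c a b * ecoef a i * ecoef b j * sin (INR i * s) * sin (INR j * t)).
  transitivity (sum_f_R0 (fun a => sum_f_R0 (fun b => sum_f_R0 (fun i => sum_f_R0 (fun j => X a b i j) K) K) (n - a)) n).
  { unfold poly2. rewrite sum_scal_r, sum_scal_r. apply sum_eq; intros a Ha.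
    rewrite sum_scal_r, sum_scal_r. apply sum_eq; intros b Hb.
    transitivity (c a b * (cos s ^ a * sin s) * (cos t ^ b * sin t)) ; [ring|].
    rewrite (expandK a K s) by (unfold K; lia). rewrite (expandK b K t) by (unfold K; lia).
    rewrite Rmult_assoc, sum_mult, scal_sum. apply sum_eq; intros i _.
    rewrite sum_scal_r. apply sum_eq; intros j _. unfold X. ring. }
  rewrite (swap4 X (fun a => (n - a)%nat) n K).
  unfold SS. apply sum_eq; intros i _. apply sum_eq; intros j _.
  unfold beta. rewrite sum_scal_r, sum_scal_r. apply sum_eq; intros a _.
  rewrite sum_scal_r, sum_scal_r. apply sum_eq; intros b _. unfold X. ring.
Qed.

Lemma beta_supp n c i j : (n + 2 < i + j)%nat -> beta n c i j = 0.
Proof.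
  intros H. unfold beta. apply sum_eq_R0; intros a Ha. apply sum_eq_R0; intros b Hb.
  destruct (Nat.lt_ge_cases (S a) i) as [H1|H1].
  - rewrite (ecoef_supp a i H1). ring.
  - rewrite (ecoef_supp b j) by lia. ring.
Qed.

Lemma grid_sum M N K be (u v : nat -> R) :
  sum_f_R0 (fun m => sum_f_R0 (fun l => SS K be (g M m) (g N l) * u m * v l) (2 * N - 1)) (2 * M - 1)
  = sum_f_R0 (fun i => sum_f_R0 (fun j => be i j *
       sum_f_R0 (fun m => sin (INR i * g M m) * u m) (2 * M - 1) *
       sum_f_R0 (fun l => sin (INR j * g N l) * v l) (2 * N - 1)) K) K.
Proof.
  set (X := fun m l i j => be i j * sin (INR i * g M m) * sin (INR j * g N l) * u m * v l).
  transitivity (sum_f_R0 (fun m => sum_f_R0 (fun l => sum_f_R0 (fun i => sum_f_R0 (fun j => X m l i j) K) K) (2 * N - 1)) (2 * M - 1)).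
  { apply sum_eq; intros m _. apply sum_eq; intros l _. unfold SS.
    rewrite sum_scal_r, sum_scal_r. apply sum_eq; intros i _.
    rewrite sum_scal_r, sum_scal_r. apply sum_eq; intros j _. unfold X. ring. }
  rewrite (swap4 X (fun _ => (2 * N - 1)%nat)).
  apply sum_eq; intros i _. apply sum_eq; intros j _.
  rewrite Rmult_assoc, sum_mult, scal_sum. apply sum_eq; intros m _.
  rewrite sum_scal_r. apply sum_eq; intros l _. unfold X. ring.
Qed.

Lemma even_2 h : Nat.even (2 * h) = true.
Proof. apply Nat.even_spec. exists h. reflexivity. Qed.

Lemma even_21 h : Nat.even (2 * h + 1) = false.
Proof. induction h as [|h IH]. reflexivity. replace (2 * S h + 1)%nat with (S (S (2 * h + 1))) by lia. exact IH. Qed.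

Lemma fold_idx P m : (0 < P)%nat -> (m <= 2 * P - 1)%nat -> m <> 0%nat -> m <> P ->
  exists m', (0 < m' < P)%nat /\ cos (g P m) = cos (g P m') /\ (m' = m \/ m' + m = 2 * P)%nat.
Proof.
  intros HP Hm H0 HM. destruct (le_lt_dec m P) as [H|H].
  - exists m. split. lia. split; auto.
  - exists (2 * P - m)%nat. split. lia. split. symmetry. apply cos_refl; lia. lia.
Qed.

Lemma sin_g_0 P m : (0 < P)%nat -> (m = 0 \/ m = P)%nat -> sin (g P m) = 0.
Proof.
  intros HP [->| ->]. unfold g. simpl INR. replace (0 * PI / INR P) with 0 by (field; apply not_0_INR; lia). apply sin_0.
  unfold g. replace (INR P * PI / INR P) with PI by (field; apply not_0_INR; lia). apply sin_PI.
Qed.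

Lemma vanish n c : Nat.even n = true ->
  (forall m k, mp_index n m k -> poly2 n c (mp_x n m) (mp_y n m k) = 0) ->
  forall m l, (m <= 2 * (n + 2) - 1)%nat -> (l <= 2 * (n + 3) - 1)%nat -> Nat.even (m + l) = false ->
  poly2 n c (cos (g (n + 2) m)) (cos (g (n + 3) l)) * sin (g (n + 2) m) * sin (g (n + 3) l) = 0.
Proof.
  intros Hev H m l Hm Hl Hml.
  destruct (Nat.Even_or_Odd n) as [[p Hp]|[p Hp]].
  2:{ exfalso. rewrite Hp, even_21 in Hev. discriminate. }
  assert (Hn2: (n / 2 = p)%nat) by (rewrite Hp, Nat.mul_comm, Nat.div_mul; lia).
  assert (Hq: exists q, (m + l = 2 * q + 1)%nat).
  { destruct (Nat.Even_or_Odd (m + l)) as [[q Hq]|[q Hq]]. rewrite Hq, even_2 in Hml. discriminate. eauto. }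
  destruct Hq as [q Hq].
  destruct (Nat.eq_dec m 0) as [Hm0|Hm0]. { rewrite (sin_g_0 (n+2) m) by lia. ring. }
  destruct (Nat.eq_dec m (n+2)) as [HmM|HmM]. { rewrite (sin_g_0 (n+2) m) by lia. ring. }
  destruct (Nat.eq_dec l 0) as [Hl0|Hl0]. { rewrite (sin_g_0 (n+3) l) by lia. ring. }
  destruct (Nat.eq_dec l (n+3)) as [HlN|HlN]. { rewrite (sin_g_0 (n+3) l) by lia. ring. }
  destruct (fold_idx (n+2) m) as [m' [Hm' [Em Rm]]]; try lia.
  destruct (fold_idx (n+3) l) as [l' [Hl' [El Rl]]]; try lia.
  rewrite Em, El.
  destruct (Nat.Even_or_Odd m') as [[h Hh]|[h Hh]].
  - assert (exists h', l' = 2 * h' + 1)%nat as [h' Hh'].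
    { destruct (Nat.Even_or_Odd l') as [[h' Hh']|[h' Hh']]; [lia|eauto]. }
    assert (Hmk: mp_index n m' (S h')) by (unfold mp_index; lia).
    specialize (H _ _ Hmk).
    unfold mp_x, mp_y in H. rewrite Hh, even_2 in H. rewrite <- Hh in H.
    replace ((2 * INR (S h') - 1) * PI / INR (n + 3)) with (g (n + 3) l') in H.
    2:{ unfold g. rewrite Hh', plus_INR, mult_INR, (S_INR h'). replace (INR 2) with 2 by (simpl; ring). replace (INR 1) with 1 by reflexivity. field. apply not_0_INR; lia. }
    unfold g at 1. rewrite H. ring.
  - assert (exists h', l' = 2 * h')%nat as [h' Hh'].
    { destruct (Nat.Even_or_Odd l') as [[h' Hh']|[h' Hh']]; [eauto|lia]. }
    assert (Hmk: mp_index n m' h') by (unfold mp_index; lia).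
    specialize (H _ _ Hmk).
    unfold mp_x, mp_y in H. rewrite Hh, even_21 in H. rewrite <- Hh in H.
    replace (2 * INR h' * PI / INR (n + 3)) with (g (n + 3) l') in H.
    2:{ unfold g. rewrite Hh', mult_INR. simpl INR. field. apply not_0_INR; lia. }
    unfold g at 1. rewrite H. ring.
Qed.

Lemma opp_sum (f : nat -> R) N : sum_f_R0 (fun m => - f m) N = - sum_f_R0 f N.
Proof. induction N as [|N IH]. reflexivity. rewrite !tech5, IH. ring. Qed.

Lemma delta2 K (be : nat -> nat -> R) a b A B : (a <= K)%nat -> (b <= K)%nat ->
  sum_f_R0 (fun i => sum_f_R0 (fun j => be i j * (A * (if Nat.eqb i a then 1 else 0)) *
     (B * (if Nat.eqb j b then 1 else 0))) K) K = be a b * A * B.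
Proof.
  intros Ha Hb.
  rewrite (sum_eq _ (fun i => (be i b * A * B) * (if Nat.eqb i a then 1 else 0))).
  - apply (sum_delta (fun i => be i b * A * B)); auto.
  - intros i _.
    rewrite (sum_eq _ (fun j => (be i j * A * B * (if Nat.eqb i a then 1 else 0)) * (if Nat.eqb j b then 1 else 0)))
      by (intros; ring).
    apply (sum_delta (fun j => be i j * A * B * (if Nat.eqb i a then 1 else 0))). auto.
Qed.

Lemma core n c : Nat.even n = true ->
  (forall m k, mp_index n m k -> poly2 n c (mp_x n m) (mp_y n m k) = 0) ->
  forall s t, poly2 n c (cos s) (cos t) * sin s * sin t = 0.
Proof.
  intros Hev H.
  set (M := (n + 2)%nat). set (N := (n + 3)%nat).
  assert (Hb: forall i' j', (0 < i' < M)%nat -> (0 < j' < N)%nat -> beta n c i' j' = 0).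
  { intros i' j' Hi' Hj'.
    set (u1 := fun m => sin (INR i' * g M m)). set (v1 := fun l => sin (INR j' * g N l)).
    set (u2 := fun m => (-1) ^ m * sin (INR i' * g M m)). set (v2 := fun l => (-1) ^ l * sin (INR j' * g N l)).
    assert (E: sum_f_R0 (fun m => sum_f_R0 (fun l => SS M (beta n c) (g M m) (g N l) * u1 m * v1 l) (2 * N - 1)) (2 * M - 1)
             = sum_f_R0 (fun m => sum_f_R0 (fun l => SS M (beta n c) (g M m) (g N l) * u2 m * v2 l) (2 * N - 1)) (2 * M - 1)).
    { apply sum_eq; intros m Hm. apply sum_eq; intros l Hl.
      unfold M. rewrite <- expand2. fold M.
      destruct (Nat.Even_or_Odd (m + l)) as [[q Hq]|[q Hq]].
      - unfold u1, u2, v1, v2.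
        assert (Hs: (-1) ^ m * (-1) ^ l = 1) by (rewrite <- pow_add, Hq; apply pow_1_even).
        transitivity (poly2 n c (cos (g M m)) (cos (g N l)) * sin (g M m) * sin (g N l) * sin (INR i' * g M m) * sin (INR j' * g N l) * ((-1) ^ m * (-1) ^ l)).
        rewrite Hs; ring. ring.
      - assert (V: poly2 n c (cos (g M m)) (cos (g N l)) * sin (g M m) * sin (g N l) = 0)
          by (apply (vanish n c Hev H); unfold M, N in *; try lia; rewrite Hq; apply even_21).
        rewrite V. ring. }
    rewrite !grid_sum in E.
    match type of E with ?L = ?R =>
      assert (L1: L = sum_f_R0 (fun i => sum_f_R0 (fun j => beta n c i j * (INR M * (if Nat.eqb i i' then 1 else 0)) * (INR N * (if Nat.eqb j j' then 1 else 0))) M) M);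
      [|assert (L2: R = sum_f_R0 (fun i => sum_f_R0 (fun j => beta n c i j * (- INR M * (if Nat.eqb i (M - i') then 1 else 0)) * (- INR N * (if Nat.eqb j (N - j') then 1 else 0))) M) M)]
    end.
    { apply sum_eq; intros i Hi. apply sum_eq; intros j Hj. unfold u1, v1.
        cbv beta.
        rewrite !sin_orth by (unfold M, N in *; lia). reflexivity. }
    { apply sum_eq; intros i Hi. apply sum_eq; intros j Hj. unfold u2, v2. cbv beta.
        rewrite (sum_eq _ (fun m => - (sin (INR i * g M m) * sin (INR (M - i') * g M m)))).
        2:{ intros m _. rewrite (sign_sin M i' m) by (unfold M; lia). ring. }
        rewrite (sum_eq (fun l => sin (INR j * g N l) * ((-1)^l * sin (INR j' * g N l))) (fun m => - (sin (INR j * g N m) * sin (INR (N - j') * g N m)))).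
        2:{ intros m _. rewrite (sign_sin N j' m) by (unfold N; lia). ring. }
        rewrite !opp_sum, !sin_orth by (unfold M, N in *; lia). ring. }
    rewrite L1, L2 in E.
    rewrite !delta2 in E by (unfold M, N in *; lia).
    assert (HMN: INR M * INR N <> 0) by (apply Rmult_integral_contrapositive; split; apply not_0_INR; unfold M, N; lia).
    destruct (le_lt_dec (i' + j') (n + 2)) as [Hs|Hs].
    - rewrite (beta_supp n c (M - i') (N - j')) in E by (unfold M, N; lia).
      apply (Rmult_eq_reg_r (INR M * INR N)); [|exact HMN]. lra.
    - apply beta_supp. lia. }
  intros s t. rewrite expand2. unfold SS. apply sum_eq_R0; intros i Hi. apply sum_eq_R0; intros j Hj.
  destruct (Nat.eq_dec i 0) as [->|Hi0]. { simpl INR. rewrite Rmult_0_l, sin_0. ring. }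
  destruct (Nat.eq_dec j 0) as [->|Hj0]. { simpl INR. rewrite Rmult_0_l, sin_0. ring. }
  destruct (Nat.eq_dec i (n + 2)) as [->|HiM]. { rewrite beta_supp by lia. ring. }
  rewrite Hb by (unfold M, N; lia). ring.
Qed.

Lemma cont_poly_x n c y z : continuity_pt (fun x => poly2 n c x y) z.
Proof.
  unfold poly2. apply (continuity_pt_finite_SF (fun i x => sum_f_R0 (fun j => c i j * x ^ i * y ^ j) (n - i))).
  intros i _. apply (continuity_pt_finite_SF (fun j x => c i j * x ^ i * y ^ j)). intros j _. reg.
Qed.

Lemma cont_poly_y n c x z : continuity_pt (fun y => poly2 n c x y) z.
Proof.
  unfold poly2. apply (continuity_pt_finite_SF (fun i y => sum_f_R0 (fun j => c i j * x ^ i * y ^ j) (n - i))).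
  intros i _. apply (continuity_pt_finite_SF (fun j y => c i j * x ^ i * y ^ j)). intros j _. reg.
Qed.

Lemma ext_boundary (h : R -> R) : (forall z, continuity_pt h z) -> (forall z, -1 < z < 1 -> h z = 0) ->
  forall z, -1 <= z <= 1 -> h z = 0.
Proof.
  intros Hc H0 z Hz.
  destruct (Req_dec z 1) as [E|E]; [|destruct (Req_dec z (-1)) as [E'|E']; [|apply H0; lra]];
  (destruct (Req_dec (h z) 0) as [Hh|Hh]; [exact Hh|exfalso]);
  (specialize (Hc z); unfold continuity_pt, continue_in, limit1_in, limit_in in Hc;
   destruct (Hc (Rabs (h z)) (Rabs_pos_lt _ Hh)) as [alp [Halp Hl]];
   set (d := Rmin (alp / 2) (1 / 2));
   assert (Hd1: 0 < d) by (unfold d; apply Rmin_pos; lra);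
   assert (Hd2: d <= alp / 2) by (unfold d; apply Rmin_l);
   assert (Hd3: d <= 1 / 2) by (unfold d; apply Rmin_r);
   specialize (Hl (z * (1 - d))));
  (rewrite (H0 (z * (1 - d))) in Hl by (subst z; nra));
  (simpl dist in Hl; unfold R_dist in Hl;
   rewrite Rminus_0_l, Rabs_Ropp in Hl;
   assert (Rabs (h z) < Rabs (h z)); [apply Hl; split; [split; [exact I| subst z; nra]|]|lra];
   subst z; unfold Rabs; destruct (Rcase_abs _); lra).
Qed.

Lemma uni n c : Nat.even n = true ->
  (forall m k, mp_index n m k -> poly2 n c (mp_x n m) (mp_y n m k) = 0) ->
  forall x y, -1 <= x <= 1 -> -1 <= y <= 1 -> poly2 n c x y = 0.
Proof.
  intros Hev H.
  assert (Hint: forall x y, -1 < x < 1 -> -1 < y < 1 -> poly2 n c x y = 0).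
  { intros x y Hx Hy. pose proof (core n c Hev H (acos x) (acos y)) as C.
    rewrite !cos_acos, !sin_acos in C by lra.
    assert (0 < sqrt (1 - x²)) by (apply sqrt_lt_R0; unfold Rsqr; nra).
    assert (0 < sqrt (1 - y²)) by (apply sqrt_lt_R0; unfold Rsqr; nra).
    apply Rmult_integral in C. destruct C as [C|C]; [|lra].
    apply Rmult_integral in C. destruct C as [C|C]; [exact C|lra]. }
  assert (Hx: forall x y, -1 <= x <= 1 -> -1 < y < 1 -> poly2 n c x y = 0).
  { intros x y Hx Hy. apply (ext_boundary (fun x => poly2 n c x y)); [| |exact Hx].
    - intros; apply cont_poly_x.
    - intros; apply Hint; auto. }
  intros x y Hx' Hy'. apply (ext_boundary (fun y => poly2 n c x y)); [| |exact Hy'].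
  - intros; apply cont_poly_y.
  - intros; apply Hx; auto.
Qed.

Lemma mpx_neg n m : (m <= n + 2)%nat -> - mp_x n m = mp_x n (n + 2 - m).
Proof.
  intros Hm. unfold mp_x. assert (0 < INR (n + 2)) by (apply lt_0_INR; lia).
  replace (INR (n + 2 - m) * PI / INR (n + 2)) with (PI - INR m * PI / INR (n + 2))
    by (rewrite minus_INR by lia; field; lra).
  rewrite Rtrigo_facts.cos_pi_minus. reflexivity.
Qed.

Lemma mpy_refl n m k : Nat.even n = true -> (m <= n + 2)%nat -> mp_y n m k = mp_y n (n + 2 - m) k.
Proof.
  intros Hev Hm. unfold mp_y. rewrite Nat.even_sub by lia.
  replace (Nat.even (n + 2)) with true.
  - destruct (Nat.even m); reflexivity.
  - replace (n + 2)%nat with (S (S n)) by lia. simpl. auto.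
Qed.

Lemma in_P2_poly2 n f : in_P2 n f -> exists c, forall x y, f x y = poly2 n c x y.
Proof. intros [c Hc]. exists c. exact Hc. Qed.

Lemma lag_sym n l : Nat.even n = true -> is_lagrange_MP n l ->
  forall m k, mp_index n m k -> forall x y, -1 <= x <= 1 -> -1 <= y <= 1 ->
  l m k (- x) y = l (n + 2 - m)%nat k x y.
Proof.
  intros Hev Hl m k Hmk x y Hx Hy.
  assert (Hmk2: mp_index n (n + 2 - m) k) by (unfold mp_index in *; lia).
  destruct (Hl m k Hmk) as [[c1 H1] L1]. destruct (Hl _ _ Hmk2) as [[c2 H2] L2].
  set (c := fun a b => c1 a b * (-1) ^ a - c2 a b).
  assert (E: forall x y, l m k (- x) y - l (n + 2 - m)%nat k x y = poly2 n c x y).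
  { intros u v. rewrite H1, H2. unfold poly2. rewrite <- minus_sum. apply sum_eq; intros a _.
    rewrite <- minus_sum. apply sum_eq; intros b _. unfold c.
    replace (- u) with ((-1) * u) by ring. rewrite Rpow_mult_distr. ring. }
  assert (Z: poly2 n c x y = 0).
  { apply uni; auto. intros m' k' Hm'. rewrite <- E.
    assert (Hm'r: (m' <= n + 2)%nat) by (unfold mp_index in Hm'; lia).
    rewrite (mpx_neg n m' Hm'r), (mpy_refl n m' k' Hev Hm'r) at 1.
    assert (Hm'2: mp_index n (n + 2 - m') k') by (unfold mp_index in *; lia).
    rewrite (L1 _ _ Hm'2), (L2 _ _ Hm').
    unfold mp_index in *.
    destruct (Nat.eqb_spec m (n + 2 - m')); destruct (Nat.eqb_spec (n + 2 - m) m');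
      simpl; try lra; lia. }
  rewrite <- E in Z. lra.
Qed.

Theorem lemma5 (n : nat) (Hn : (0 < n)%nat) (Hev : Nat.even n = true)
  (l : nat -> nat -> R -> R -> R) (Hl : is_lagrange_MP n l)
  (x y : R) (Hx : -1 <= x <= 1) (Hy : -1 <= y <= 1) :
  lebesgue_MP n l x y = lebesgue_MP n l (- x) y.
Proof.
  unfold lebesgue_MP.
  rewrite <- (sum_rev (fun m => sum_f_R0 (fun k => Rabs (l (S m) (S k) x y)) (n / 2)) n).
  apply sum_eq; intros m Hm. apply sum_eq; intros k Hk.
  rewrite (lag_sym n l Hev Hl (S m) (S k)); auto.
  - f_equal. f_equal. lia.
  - unfold mp_index. lia.
Qed.
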